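(* Let $\mathbb{X}$ be a two-dimensional real Banach space, let $x\in S_{\mathbb{X}}$ be a smooth point, and let $\epsilon\in[0,1)$. Then there exists a normal cone $K$ in $\mathbb{X}$ such that $G(x,\epsilon)=K\cup(-K)$.
   Context: $S_{\mathbb{X}}$ is the unit sphere. A point $x\in S_{\mathbb{X}}$ is smooth if there is a unique norm-one linear functional $f$ with $f(x)=1$. For $x,y\in\mathbb{X}$ and $\epsilon\in[0,1)$, $x\perp_B^{\epsilon} y$ means $\|x+\lambda y\|^2\geq\|x\|^2-2\epsilon\|x\|\,\|\lambda y\|$ for all $\lambda\in\mathbb{R}$; $G(x,\epsilon)=\{y\in\mathbb{X}: x\perp_B^{\epsilon}y\}$. A subset $K\subseteq\mathbb{X}$ is a normal cone if $K+K\subseteq K$, $\alpha K\subseteq K$ for all $\alpha\geq0$, and $K\cap(-K)=\{0\}$. *)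

(* Defs.v *)
From HB Require Import structures.
From mathcomp Require Import all_boot all_order all_algebra.
From mathcomp Require Import all_classical all_reals all_analysis.
Set Implicit Arguments. Unset Strict Implicit. Unset Printing Implicit Defensive.
Import Order.TTheory GRing.Theory Num.Theory.
Import numFieldNormedType.Exports.
Local Open Scope classical_set_scope.
Local Open Scope ring_scope.

Section Defs.
Variables (R : realType) (V : normedModType R).

Definition dim2 : Prop :=
  exists e1 e2 : V,
    (forall s t : R, s *: e1 + t *: e2 = 0 -> s = 0 /\ t = 0) /\
    (forall v : V, exists s t : R, v = s *: e1 + t *: e2).

Definition lin_functional (f : V -> R) : Prop :=
  forall (a : R) (u v : V), f (a *: u + v) = a * f u + f v.

Definition norm_one_functional (f : V -> R) : Prop :=
  (forall v : V, `|f v| <= `|v|) /\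
  (forall e : R, 0 < e -> exists v : V, `|v| = 1 /\ 1 - e < `|f v|).

Definition smooth_point (x : V) : Prop :=
  `|x| = 1 /\
  exists f : V -> R,
    [/\ lin_functional f, norm_one_functional f, f x = 1 &
       forall g : V -> R, lin_functional g -> norm_one_functional g ->
         g x = 1 -> g = f].

Definition bj_orth (eps : R) (x y : V) : Prop :=
  forall lam : R,
    `|x + lam *: y| ^+ 2 >= `|x| ^+ 2 - 2 * eps * `|x| * `|lam *: y|.

Definition G (x : V) (eps : R) : set V := [set y | bj_orth eps x y].

Definition normal_cone (K : set V) : Prop :=
  [/\ (forall u v, K u -> K v -> K (u + v)),
      (forall (a : R) v, 0 <= a -> K v -> K (a *: v)) &
      K `&` [set - v | v in K] = [set 0]].

End Defs.

(* Main.v *)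
Require Import Defs.
From HB Require Import structures.
From mathcomp Require Import all_boot all_order all_algebra.
From mathcomp Require Import all_classical all_reals all_analysis.
From mathcomp Require Import lra ring.
Import Order.TTheory GRing.Theory Num.Theory.
Import numFieldNormedType.Exports.
Local Open Scope classical_set_scope.
Local Open Scope ring_scope.

Set Implicit Arguments. Unset Strict Implicit.
Section Aux.
Variables (R : realType) (V : normedModType R).

Lemma lin0 (f : V -> R) : lin_functional f -> f 0 = 0.
Proof. move=> lf; have := lf 1 0 0; rewrite scale1r addr0 mul1r; lra. Qed.

Lemma linD (f : V -> R) : lin_functional f -> forall u v, f (u + v) = f u + f v.
Proof. by move=> lf u v; have := lf 1 u v; rewrite scale1r mul1r. Qed.

Lemma linZ (f : V -> R) : lin_functional f -> forall a v, f (a *: v) = a * f v.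
Proof. by move=> lf a v; have := lf a v 0; rewrite addr0 (lin0 lf) addr0. Qed.

Lemma linN (f : V -> R) : lin_functional f -> forall v, f (- v) = - f v.
Proof. by move=> lf v; rewrite -scaleN1r (linZ lf) mulN1r. Qed.

Lemma addcomb (u w : V) a b c d :
  (a *: u + b *: w) + (c *: u + d *: w) = (a + c) *: u + (b + d) *: w.
Proof. by rewrite addrACA -!scalerDl. Qed.

Lemma scalecomb (u w : V) k a b :
  k *: (a *: u + b *: w) = (k * a) *: u + (k * b) *: w.
Proof. by rewrite scalerDr !scalerA. Qed.

Lemma combeq (u w : V) a b c d : a = c -> b = d ->
  a *: u + b *: w = c *: u + d *: w.
Proof. by move=> -> ->. Qed.

Lemma vec_eq (x z : V) :
  (forall a b : R, a *: x + b *: z = 0 -> a = 0 /\ b = 0) ->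
  forall a b c d, a *: x + b *: z = c *: x + d *: z -> a = c /\ b = d.
Proof.
move=> ind a b c d e.
have := ind (a - c) (b - d).
rewrite !scalerBl addrACA -opprD e subrr => /(_ erefl) [].
by move/eqP; rewrite subr_eq0 => /eqP -> /eqP; rewrite subr_eq0 => /eqP ->.
Qed.

Lemma span2 (x z : V) : dim2 V ->
  (forall a b : R, a *: x + b *: z = 0 -> a = 0 /\ b = 0) ->
  forall v, exists a b : R, v = a *: x + b *: z.
Proof.
move=> [e1 [e2 [ind sp]]] indxz v.
have [p [q ex]] := sp x; have [r [s ez]] := sp z; have [al [be ev]] := sp v.
have comb : forall c1 c2 : R, c1 *: x + c2 *: z =
    (c1 * p + c2 * r) *: e1 + (c1 * q + c2 * s) *: e2.
  by move=> c1 c2; rewrite ex ez !scalecomb addcomb.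
have [D0|Dn0] := eqVneq (p * s - q * r) 0.
  exfalso.
  have h1 := indxz s (- q); have h2 := indxz (- r) p.
  rewrite comb in h1; rewrite comb in h2.
  have [s0 q0] : s = 0 /\ - q = 0.
    apply: h1; have -> : s * p + - q * r = 0 by rewrite -D0; ring.
    have -> : s * q + - q * s = 0 by ring.
    by rewrite !scale0r addr0.
  have [r0 p0] : - r = 0 /\ p = 0.
    apply: h2; have -> : - r * p + p * r = 0 by ring.
    have -> : - r * q + p * s = 0 by rewrite -D0; ring.
    by rewrite !scale0r addr0.
  have q0' : q = 0 by lra.
  have := indxz 1 0; rewrite ex p0 q0' !scale0r !addr0 scaler0.
  by case=> // /eqP; rewrite oner_eq0.
exists ((al * s - be * r) / (p * s - q * r)), ((be * p - al * q) / (p * s - q * r)).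
rewrite comb ev; apply: combeq; by field.
Qed.


Lemma indep_ker (f : V -> R) (x z : V) : lin_functional f -> f x = 1 -> f z = 0 -> z != 0 ->
  forall a b : R, a *: x + b *: z = 0 -> a = 0 /\ b = 0.
Proof.
move=> lf fx fz z0 a b e.
have := congr1 f e; rewrite (linD lf) !(linZ lf) fx fz (lin0 lf) mulr1 mulr0 addr0 => a0.
split=> //; move: e; rewrite a0 scale0r add0r => /eqP; rewrite scaler_eq0 (negbTE z0) orbF.
by move/eqP.
Qed.

Lemma coord_fun (f : V -> R) (x z : V) : dim2 V -> lin_functional f -> f x = 1 ->
  f z = 0 -> z != 0 ->
  exists h : V -> R, [/\ lin_functional h, h x = 0, h z = 1 &
     forall v, v = f v *: x + h v *: z].
Proof.
move=> d2 lf fx fz z0.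
have ind := indep_ker lf fx fz z0.
have ex : forall v, exists b : R, v = f v *: x + b *: z.
  move=> v; have [a [b e]] := span2 d2 ind v.
  exists b; have := congr1 f e; rewrite (linD lf) !(linZ lf) fx fz mulr1 mulr0 addr0.
  by move=> ->.
have [h hh] := boolp.choice ex.
have E := vec_eq ind.
exists h; split.
- move=> a u v.
  have e1 := hh (a *: u + v).
  have e2 : a *: u + v = (a * f u + f v) *: x + (a * h u + h v) *: z.
    transitivity (a *: (f u *: x + h u *: z) + (f v *: x + h v *: z)).
      by rewrite -hh -hh.
    by rewrite scalecomb addcomb.
  by have [_ ->] := E _ _ _ _ (etrans (esym e1) e2).
- have e1 := hh x.
  have := E (f x) (h x) 1 0; rewrite -e1 scale1r scale0r addr0.
  by case/(_ erefl).
- have e1 := hh z.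
  have := E (f z) (h z) 0 1; rewrite -e1 scale1r scale0r add0r.
  by case/(_ erefl).
- exact: hh.
Qed.


Lemma oppcomb (u w : V) a b : - (a *: u + b *: w) = (- a) *: u + (- b) *: w.
Proof. by rewrite opprD -!scaleNr. Qed.

Lemma lemA (f : V -> R) (x z : V) : dim2 V -> lin_functional f ->
  (forall v, `|f v| <= `|v|) -> f x = 1 -> `|x| = 1 ->
  (forall g, lin_functional g -> norm_one_functional g -> g x = 1 -> g = f) ->
  f z = 0 ->
  forall d, 0 < d -> exists s, 0 < s /\ `|x + s *: z| <= 1 + d * s.
Proof.
move=> d2 lf nf fx nx uniq fz d d0.
have [->|z0] := eqVneq z 0.
  exists 1; split => //; rewrite scaler0 addr0 nx; lra.
have [h [lh hx hz hh]] := coord_fun d2 lf fx fz z0.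
case: (pselect (exists s, 0 < s /\ `|x + s *: z| <= 1 + d * s)) => // nH.
exfalso.
have H : forall s, 0 < s -> 1 + d * s < `|x + s *: z|.
  move=> s s0; rewrite ltNge; apply/negP => hs; apply: nH; by exists s.
pose g := fun v => f v + d * h v.
have lg : lin_functional g.
  move=> a u v; rewrite /g lf lh; ring.
have gle : forall v, g v <= `|v|.
  move=> v; rewrite /g.
  have ev := hh v.
  have [b0|b0] := leP (h v) 0.
    have := nf v; rewrite ler_norml => /andP[_ ?]; nra.
  have [a0|a0] := ltP 0 (f v).
    have e : v = f v *: (x + (h v / f v) *: z).
      rewrite scalerDr scalerA mulrCA divff ?mulr1; first exact: ev.
      by rewrite gt_eqF.
    have := H (h v / f v) (divr_gt0 b0 a0).
    have -> : `|v| = f v * `|x + (h v / f v) *: z|.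
      by rewrite {1}e normrZ gtr0_norm.
    have : f v * (1 + d * (h v / f v)) = f v + d * h v.
      by field; rewrite gt_eqF.
    nra.
  have e : v = h v *: (x + z) - (h v - f v) *: x.
    rewrite {1}ev.
    rewrite -{2}[x]scale1r -[z]scale1r -[(h v - f v) *: x]addr0 -(scale0r z).
    rewrite -[1 *: x + 1 *: z]/(1 *: x + 1 *: z) scalecomb oppcomb addcomb.
    by rewrite scale1r; apply: combeq; ring.
  have := lerB_dist (h v *: (x + z)) ((h v - f v) *: x).
  rewrite -e !normrZ nx (gtr0_norm b0) ger0_norm; last lra.
  have := H 1 ltr01; rewrite scale1r.
  nra.
have ng : norm_one_functional g.
  split.
    move=> v; rewrite ler_norml gle andbT.
    have := gle (- v); rewrite normrN.
    have -> : g (- v) = - g v by rewrite /g (linN lf) (linN lh); ring.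
    lra.
  move=> e e0; exists x; split => //.
  rewrite /g fx hx mulr0 addr0 normr1; lra.
have gx : g x = 1 by rewrite /g fx hx mulr0 addr0.
have := uniq g lg ng gx => /(congr1 (fun k => k z)).
rewrite /g fz hz; lra.
Qed.

Lemma shrink (x z : V) d s0 s : `|x| = 1 -> 0 < s -> s <= s0 ->
  `|x + s0 *: z| <= 1 + d * s0 -> `|x + s *: z| <= 1 + d * s.
Proof.
move=> nx s0p ss0 H.
have s0p' : 0 < s0 by apply: lt_le_trans ss0.
pose t := s / s0.
have t0 : 0 < t by apply: divr_gt0.
have t1 : t <= 1 by rewrite /t ler_pdivrMr // mul1r.
have ts : t * s0 = s by rewrite /t divfK // gt_eqF.
clearbody t.
have e : x + s *: z = (1 - t) *: x + t *: (x + s0 *: z).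
  by rewrite scalerDr scalerA addrA -scalerDl subrK scale1r ts.
rewrite e; apply: (le_trans (ler_normD _ _)).
rewrite !normrZ nx (ger0_norm (ltW t0)) ger0_norm; last lra.

have: t * `|x + s0 *: z| <= t * (1 + d * s0) by rewrite ler_wpM2l // ltW.
have: d * (t * s0) = d * s by rewrite ts.
nra.
Qed.


Lemma fwd (f : V -> R) (x : V) eps : dim2 V -> lin_functional f ->
  (forall v, `|f v| <= `|v|) -> f x = 1 -> `|x| = 1 ->
  (forall g, lin_functional g -> norm_one_functional g -> g x = 1 -> g = f) ->
  0 <= eps -> forall y, bj_orth eps x y -> f y <= eps * `|y|.
Proof.
move=> d2 lf nf fx nx uniq e0 y bj.
rewrite leNgt; apply/negP => ha.
have ey : 0 <= eps * `|y| by rewrite mulr_ge0.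
move: ha; set a := f y => ha.
pose z := a *: x - y.
have fz : f z = 0 by rewrite /z (linD lf) (linN lf) (linZ lf) fx mulr1 subrr.
pose dl := (a - eps * `|y|) / 2.
have dl0 : 0 < dl by rewrite /dl; lra.
pose k := a - dl.
have k0 : 0 < k by rewrite /k /dl; lra.
have ek : eps * `|y| = k - dl by rewrite /k /dl; lra.
have a0 : 0 < a by lra.
have [s0 [s0p Hs0]] := lemA d2 lf nf fx nx uniq fz dl0.
pose s := Order.min s0 (dl / k^+2).
have sp : 0 < s by rewrite lt_min s0p divr_gt0 // exprn_gt0.
have ss0 : s <= s0 by rewrite ge_min lexx.
have sk : s <= dl / k^+2 by rewrite ge_min lexx orbT.
have Hs := shrink nx sp ss0 Hs0.
clearbody s.
have sk2 : s * k^+2 <= dl by rewrite -ler_pdivlMr // exprn_gt0.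
have as0 : 0 < 1 + a * s by nra.
pose t := s / (1 + a * s).
pose c := 1 - t * a.
have cE1 : c * (1 + s * a) = 1 by rewrite /c /t; field; rewrite gt_eqF.
have cE2 : c * - s = - t by rewrite /c /t; field; rewrite gt_eqF.
have cE3 : c * (1 + dl * s) = 1 - t * k by rewrite /c /t /k; field; rewrite gt_eqF.
have t0 : 0 < t by rewrite /t divr_gt0.
have ts : t <= s by rewrite /t ler_pdivrMr // ler_pMr //; nra.
have c0 : 0 < c by rewrite /c /t; rewrite -(@ltr_pM2r _ (1 + a * s)) // mul0r
  mulrBl mul1r mulrAC divfK ?gt_eqF //; nra.
clearbody t c.
have E1 : x + s *: z = (1 + s * a) *: x + (- s) *: y.
  by rewrite /z scalerBr scalerA addrA scalerDl scale1r scaleNr.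
have E : x + (- t) *: y = c *: (x + s *: z).
  by rewrite E1 scalecomb cE1 cE2 scale1r.
have := bj (- t).
rewrite nx expr1n mulr1 normrZ normrN (gtr0_norm t0) E normrZ (gtr0_norm c0).
have M1 : c * `|x + s *: z| <= 1 - t * k.
  by rewrite -cE3 ler_wpM2l // ltW.
have M0 : 0 <= c * `|x + s *: z| by rewrite mulr_ge0 // ltW.
move: M1 M0; set M := c * `|x + s *: z| => M1 M0.
have M2 : M ^+ 2 <= (1 - t * k) ^+ 2 by rewrite ler_pXn2r // ?nnegrE; lra.
move=> B.
have : 2 * t * dl <= t ^+ 2 * k ^+ 2.
  nra.
have : t * k ^+ 2 <= dl by nra.
nra.
Qed.


Lemma bwd (f : V -> R) (x : V) eps : lin_functional f ->
  (forall v, `|f v| <= `|v|) -> f x = 1 -> `|x| = 1 -> 0 <= eps ->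
  forall y, `|f y| <= eps * `|y| -> bj_orth eps x y.
Proof.
move=> lf nf fx nx e0 y hy lam.
rewrite /Order.ge /= nx expr1n mulr1 normrZ.
have h1 : 1 + lam * f y <= `|x + lam *: y|.
  have := nf (x + lam *: y); rewrite (linD lf) (linZ lf) fx ler_norml.
  by case/andP.
have h2 : `|lam * f y| <= `|lam| * (eps * `|y|) by rewrite normrM ler_wpM2l.
move: h2; rewrite ler_norml => /andP[h2 _].
have N0 : 0 <= `|x + lam *: y| by [].
have q0 : 0 <= `|lam| * (eps * `|y|) by rewrite !mulr_ge0.
move: h1 h2 N0 q0.
set N := `|x + lam *: y|; set q := `|lam| * (eps * `|y|); set p := lam * f y.
move=> h1 h2 N0 q0.
have -> : 2 * eps * (`|lam| * `|y|) = 2 * q by rewrite /q; ring.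
have [q1|q1] := leP q 1; last nra.
have : 1 - q <= N by lra.
nra.
Qed.


Lemma half_cross (F H : V -> R) (x z : V) eps : lin_functional F -> lin_functional H ->
  (forall v, v = F v *: x + H v *: z) -> `|x| = 1 -> 0 <= eps -> eps <= 1 ->
  forall u v, `|F u| <= eps * `|u| -> 0 < H u -> 0 <= H v ->
  F (u + v) * H u <= F u * H (u + v) -> F (u + v) <= eps * `|u + v|.
Proof.
move=> lF lH rep nx e0 e1 u v hu Hu Hv cr.
have HS : H (u + v) = H u + H v by rewrite (linD lH).
move: cr HS; set S := u + v => cr HS.
pose r := H S / H u.
have r0 : 0 <= r by rewrite /r divr_ge0 //; lra.
have rHu : r * H u = H S by rewrite /r divfK // gt_eqF.
clearbody r.
pose w := r *: u.
have Fw : F w = r * F u by rewrite /w (linZ lF).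
have Hw : H w = H S by rewrite /w (linZ lH).
have FwS : F S <= F w.
  rewrite Fw; rewrite -(@ler_pM2r _ (H u)) //; rewrite -mulrA mulrCA rHu; lra.
have nw : `|F w| <= eps * `|w|.
  rewrite Fw /w normrM normrZ (ger0_norm r0); rewrite mulrCA ler_wpM2l //.
clearbody w.
pose dd := F w - F S.
have dd0 : 0 <= dd by rewrite /dd; lra.
have eS : S = w - dd *: x.
  rewrite {1}(rep S) {1}(rep w) Hw.
  rewrite -[dd *: x]addr0 -(scale0r z) oppcomb addcomb; apply: combeq; rewrite /dd; ring.
have := lerB_dist w (dd *: x); rewrite -eS normrZ nx (ger0_norm dd0) mulr1.
move: nw; rewrite ler_norml => /andP[_ nw].
have : F S = F w - dd by rewrite /dd; ring.
nra.
Qed.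

Lemma zero_of (F H : V -> R) (x z : V) eps : lin_functional F ->
  (forall v, v = F v *: x + H v *: z) -> `|x| = 1 -> eps < 1 ->
  forall u, `|F u| <= eps * `|u| -> H u = 0 -> u = 0.
Proof.
move=> lF rep nx e1 u hu Hu.
have eu : u = F u *: x by rewrite {1}(rep u) Hu scale0r addr0.
have : `|u| = `|F u| by rewrite {1}eu normrZ nx mulr1.
move=> nu; rewrite nu in hu.
have : `|F u| = 0 by have := normr_ge0 (F u); nra.
move/eqP; rewrite normr_eq0 => /eqP Fu0.
by rewrite eu Fu0 scale0r.
Qed.

Lemma cone_add (F H : V -> R) (x z : V) eps : lin_functional F -> lin_functional H ->
  (forall v, v = F v *: x + H v *: z) -> `|x| = 1 -> 0 <= eps -> eps < 1 ->
  forall u v, `|F u| <= eps * `|u| -> 0 <= H u -> `|F v| <= eps * `|v| -> 0 <= H v ->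
  F (u + v) <= eps * `|u + v|.
Proof.
move=> lF lH rep nx e0 e1 u v hu Hu hv Hv.
have [Hu0|Hup] := eqVneq (H u) 0.
  rewrite (zero_of lF rep nx e1 hu Hu0) add0r.
  by move: hv; rewrite ler_norml => /andP[_].
have [Hv0|Hvp] := eqVneq (H v) 0.
  rewrite (zero_of lF rep nx e1 hv Hv0) addr0.
  by move: hu; rewrite ler_norml => /andP[_].
have Hu' : 0 < H u by rewrite lt_def Hup.
have Hv' : 0 < H v by rewrite lt_def Hvp.
have e1' : eps <= 1 by lra.
have HS : H (u + v) = H u + H v by rewrite (linD lH).
have FS : F (u + v) = F u + F v by rewrite (linD lF).
have [c1|c1] := leP (F (u + v) * H u) (F u * H (u + v)).
  exact: (half_cross lF lH rep nx e0 e1' hu Hu' Hv c1).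
rewrite addrC; apply: (half_cross lF lH rep nx e0 e1' hv Hv' Hu).
rewrite addrC; move: c1; rewrite HS FS; nra.
Qed.

End Aux.

Unset Implicit Arguments. Set Strict Implicit.

Theorem theorem2p7 (R : realType) (X : completeNormedModType R)
  (hdim : dim2 X) (x : X) (hx : smooth_point x)
  (eps : R) (heps0 : 0 <= eps) (heps1 : eps < 1) :
  exists K : set X, normal_cone K /\
    G x eps = K `|` [set - v | v in K].
Proof.
have [nx [f [lf [nf _] fx uniq]]] := hx.
have [z [fz z0]] : exists z, f z = 0 /\ z != 0.
  have [e1 [e2 [ind sp]]] := hdim.
  pose z1 := e1 - f e1 *: x; pose z2 := e2 - f e2 *: x.
  have fz1 : f z1 = 0 by rewrite /z1 (linD lf) (linN lf) (linZ lf) fx mulr1 subrr.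
  have fz2 : f z2 = 0 by rewrite /z2 (linD lf) (linN lf) (linZ lf) fx mulr1 subrr.
  have [z1n|?] := eqVneq z1 0; last by exists z1.
  have [z2n|?] := eqVneq z2 0; last by exists z2.
  exfalso.
  have E1 : e1 = f e1 *: x by move/eqP: z1n; rewrite subr_eq0 => /eqP.
  have E2 : e2 = f e2 *: x by move/eqP: z2n; rewrite subr_eq0 => /eqP.
  have : f e2 *: e1 + - f e1 *: e2 = 0.
    rewrite [X in _ *: X + _]E1 [X in _ + _ *: X]E2 !scalerA -scalerDl.
    have -> : f e2 * f e1 + - f e1 * f e2 = 0 by ring.
    by rewrite scale0r.
  move/ind => [_ fe1].
  have e10 : e1 = 0 by rewrite E1 -[f e1]opprK fe1 oppr0 scale0r.
  have := ind 1 0; rewrite e10 scaler0 scale0r addr0 => /(_ erefl) [].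
  by move/eqP; rewrite oner_eq0.
have [h [lh hx0 hz hh]] := coord_fun hdim lf fx fz z0.
have nf' : forall v, `|f v| <= `|v| := nf.
have GE : forall y, G x eps y <-> `|f y| <= eps * `|y|.
  move=> y; split; last exact: (bwd lf nf' fx nx heps0).
  move=> bj; rewrite ler_norml; apply/andP; split; last first.
    exact: (fwd hdim lf nf' fx nx uniq heps0 bj).
  have bj' : bj_orth eps x (- y).
    by move=> lam; have := bj (- lam); rewrite scalerN -scaleNr.
  have := fwd hdim lf nf' fx nx uniq heps0 bj'.
  rewrite (linN lf) normrN; lra.
pose K := [set y : X | `|f y| <= eps * `|y| /\ 0 <= h y].
have lnf : lin_functional (fun v => - f v) by move=> a u w; rewrite lf; ring.
have repN : forall v, v = (- f v) *: (- x) + h v *: z.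
  by move=> v; rewrite scaleNr scalerN opprK; exact: hh.
have nxN : `|- x| = 1 by rewrite normrN.
exists K; split.
  split.
  - move=> u v [hu Hu] [hv Hv]; split; last by rewrite (linD lh) addr_ge0.
    rewrite ler_norml; apply/andP; split; last first.
      exact: (cone_add lf lh hh nx heps0 heps1 hu Hu hv Hv).
    have hu' : `|- f u| <= eps * `|u| by rewrite normrN.
    have hv' : `|- f v| <= eps * `|v| by rewrite normrN.
    have := cone_add lnf lh repN nxN heps0 heps1 hu' Hu hv' Hv.
    rewrite /=; lra.
  - move=> a v a0 [hv Hv]; split; last by rewrite (linZ lh) mulr_ge0.
    rewrite (linZ lf) normrM normrZ (ger0_norm a0) mulrCA ler_wpM2l //.
  - apply/seteqP; split => y.
      move=> [[hy Hy] [v [hv Hv] ev]].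
      have : h y = 0 by rewrite -ev (linN lh) in Hy *; lra.
      move/(zero_of lf hh nx heps1 hy) => ->; done.
    move=> /= ->; split.
      by rewrite /K /= (lin0 lf) normr0 normr0 mulr0 (lin0 lh).
    exists 0; last by rewrite oppr0.
    by rewrite /K /= (lin0 lf) normr0 normr0 mulr0 (lin0 lh).
apply/seteqP; split => y.
  move/GE => hy.
  have [Hy|Hy] := leP 0 (h y); first by left.
  right; exists (- y); last by rewrite opprK.
  rewrite /K /= (linN lf) !normrN (linN lh); split => //; lra.
case.
  by move=> [hy _]; apply/GE.
move=> [v [hv _] <-]; apply/GE; by rewrite (linN lf) !normrN.
Qed.
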